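(* Consider the controlled SEIR system and cost described in the context. There exists a constant $C>0$ such that $J_\infty(x_0,u_{\mathrm{nom}})<C$ for all $x_0\in\mathcal{M}$. Consequently, $V_\infty(x_0)<C$ for all $x_0\in\mathcal{M}$.
   Context: Fix parameters $\eta>0$, $0<\beta_{\min}\le\beta_{\mathrm{nom}}$, $0<\gamma_{\mathrm{nom}}\le\gamma_{\max}<\infty$ and $I_{\max}\in(0,1)$. Let $U:=[\beta_{\min},\beta_{\mathrm{nom}}]\times[\gamma_{\mathrm{nom}},\gamma_{\max}]$ and let $\mathcal{U}$ be the set of measurable, locally integrable functions $u=(\beta,\gamma):[0,\infty)\to U$; $u_{\mathrm{nom}}\in\mathcal{U}$ denotes the constant control $(\beta_{\mathrm{nom}},\gamma_{\mathrm{nom}})$. Let $\Pi:=\{(S,E,I)\in[0,1]^3: S+E+I\le 1\}$. For $x_0\in\Pi$ and $u\in\mathcal{U}$, $x(\cdot;x_0,u)=(S,E,I)$ denotes the unique solution of $\dot S=-\beta(t)SI$, $\dot E=\beta(t)SI-\eta E$, $\dot I=\eta E-\gamma(t)I$ with $x(0)=x_0$; it stays in $\Pi$. Let $G_\Pi:=\{(S,E,I)\in\Pi: I\le I_{\max}\}$ and $\mathcal{M}:=\{x_0\in G_\Pi: x(t;x_0,u)\in G_\Pi\ \forall t\ge0,\ \forall u\in\mathcal{U}\}$. The stage cost is $\ell(x,u):=E^2+I^2+(\beta-\beta_{\mathrm{nom}})^2+(\gamma-\gamma_{\mathrm{nom}})^2$ for $x=(S,E,I)$, $u=(\beta,\gamma)$;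 $J_\infty(x_0,u):=\int_0^\infty \ell(x(t;x_0,u),u(t))\,dt$, and $V_\infty(x_0):=\inf\{J_\infty(x_0,u): u\in\mathcal{U},\ x(t;x_0,u)\in G_\Pi\ \forall t\ge0\}$ (with $\inf\emptyset=+\infty$). *)

(* Defs.v *)
From HB Require Import structures.
From mathcomp Require Import all_boot all_order all_algebra.
From mathcomp Require Import all_classical all_reals all_analysis.
Set Implicit Arguments. Unset Strict Implicit. Unset Printing Implicit Defensive.
Import Order.TTheory GRing.Theory Num.Theory.
Local Open Scope classical_set_scope.
Local Open Scope ring_scope.

Section SEIR.
Variable R : realType.

(* state (S,E,I) and control (beta,gamma) *)
Definition state := (R * R * R)%type.
Definition control := (R * R)%type.
Definition Sc (x : state) : R := x.1.1.
Definition Ec (x : state) : R := x.1.2.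
Definition Ic (x : state) : R := x.2.

Definition Pi : set state := [set x | 0 <= Sc x <= 1 /\ 0 <= Ec x <= 1 /\
  0 <= Ic x <= 1 /\ Sc x + Ec x + Ic x <= 1].

Definition GPi (Imax : R) : set state := [set x | Pi x /\ Ic x <= Imax].

Definition Uset (bmin bnom gnom gmax : R) : set control :=
  [set v | bmin <= v.1 <= bnom /\ gnom <= v.2 <= gmax].

Definition Ucal (bmin bnom gnom gmax : R) : set (R -> control) :=
  [set u : R -> control | (forall t : R, 0 <= t -> Uset bmin bnom gnom gmax (u t)) /\
    measurable_fun (`[0%R, +oo[ : set R) (fun t => (u t).1) /\
    measurable_fun (`[0%R, +oo[ : set R) (fun t => (u t).2) /\
    (forall T, 0 <= T ->
       (@lebesgue_measure R).-integrable `[0%R, T] (fun t => ((u t).1)%:E) /\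
       (@lebesgue_measure R).-integrable `[0%R, T] (fun t => ((u t).2)%:E))].

Definition unom (bnom gnom : R) : R -> control := fun _ => (bnom, gnom).

Definition seir_rhs (eta : R) (x : state) (v : control) : state :=
  (- v.1 * Sc x * Ic x,
   v.1 * Sc x * Ic x - eta * Ec x,
   eta * Ec x - v.2 * Ic x).

(* (Caratheodory) solution on [0,oo) with x(0) = x0, in integral form *)
Definition is_solution (eta : R) (x0 : state) (u : R -> control)
    (x : R -> state) : Prop :=
  x 0 = x0 /\
  forall t, 0 <= t ->
    let f := fun s => seir_rhs eta (x s) (u s) in
    (@lebesgue_measure R).-integrable `[0%R, t] (fun s => (Sc (f s))%:E) /\
    (@lebesgue_measure R).-integrable `[0%R, t] (fun s => (Ec (f s))%:E) /\
    (@lebesgue_measure R).-integrable `[0%R, t] (fun s => (Ic (f s))%:E) /\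
    Sc (x t) = Sc x0 + Rintegral (@lebesgue_measure R) `[0%R, t] (fun s => Sc (f s)) /\
    Ec (x t) = Ec x0 + Rintegral (@lebesgue_measure R) `[0%R, t] (fun s => Ec (f s)) /\
    Ic (x t) = Ic x0 + Rintegral (@lebesgue_measure R) `[0%R, t] (fun s => Ic (f s)).

(* traj is "the" solution map x(.;x0,u): for x0 in Pi and u in Ucal,
   traj x0 u solves the system and stays in Pi (facts stated in the context) *)
Definition is_solution_map (eta bmin bnom gnom gmax : R)
    (traj : state -> (R -> control) -> R -> state) : Prop :=
  forall x0 u, Pi x0 -> Ucal bmin bnom gnom gmax u ->
    is_solution eta x0 u (traj x0 u) /\ (forall t, 0 <= t -> Pi (traj x0 u t)).

Definition Mset (bmin bnom gnom gmax Imax : R)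
    (traj : state -> (R -> control) -> R -> state) : set state :=
  [set x0 | GPi Imax x0 /\
    forall u, Ucal bmin bnom gnom gmax u ->
      forall t, 0 <= t -> GPi Imax (traj x0 u t)].

Definition stage_cost (bnom gnom : R) (x : state) (v : control) : R :=
  Ec x ^+ 2 + Ic x ^+ 2 + (v.1 - bnom) ^+ 2 + (v.2 - gnom) ^+ 2.

Definition Jinf (bnom gnom : R) (traj : state -> (R -> control) -> R -> state)
    (x0 : state) (u : R -> control) : \bar R :=
  (\int[@lebesgue_measure R]_(t in `[0%R, +oo[)
      (stage_cost bnom gnom (traj x0 u t) (u t))%:E)%E.

(* V_inf(x0) = inf over admissible controls keeping x in G_Pi (inf empty = +oo) *)
Definition Vinf (bmin bnom gnom gmax Imax : R)
    (traj : state -> (R -> control) -> R -> state) (x0 : state) : \bar R :=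
  ereal_inf [set Jinf bnom gnom traj x0 u | u in
    [set u | Ucal bmin bnom gnom gmax u /\
             forall t, 0 <= t -> GPi Imax (traj x0 u t)]].

End SEIR.

(* Main.v *)
Require Import Defs.
From HB Require Import structures.
From mathcomp Require Import all_boot all_order all_algebra.
From mathcomp Require Import all_classical all_reals all_analysis.
From mathcomp Require Import measurable_realfun.
From mathcomp Require Import ring lra.
Import Order.TTheory GRing.Theory Num.Theory.
Local Open Scope classical_set_scope.
Local Open Scope ring_scope.

Theorem lemma3 (R : realType) (eta bmin bnom gnom gmax Imax : R)
  (traj : state R -> (R -> control R) -> R -> state R) :
  0 < eta -> 0 < bmin -> bmin <= bnom -> 0 < gnom -> gnom <= gmax ->
  0 < Imax -> Imax < 1 ->
  is_solution_map eta bmin bnom gnom gmax traj ->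
  exists C : R, 0 < C /\
    (forall x0, Mset bmin bnom gnom gmax Imax traj x0 ->
       (Jinf bnom gnom traj x0 (unom bnom gnom) < C%:E)%E) /\
    (forall x0, Mset bmin bnom gnom gmax Imax traj x0 ->
       (Vinf bmin bnom gnom gmax Imax traj x0 < C%:E)%E).
Proof.
move=> eta0 bmin0 bminnom gnom0 gnommax Imax0 Imax1 Hsol.
have ei0 : 0 < eta^-1 by rewrite invr_gt0.
have gi0 : 0 < gnom^-1 by rewrite invr_gt0.
set B := eta^-1 + gnom^-1.
have Uu : Ucal bmin bnom gnom gmax (unom bnom gnom).
  split; first by move=> t _; rewrite /Uset /unom /= bminnom gnommax !lexx.
  split; first exact: measurable_cst.
  split; first exact: measurable_cst.
  move=> T T0; split.
  - apply: (@continuous_compact_integrable _ (fun _ => bnom)); first exact: segment_compact.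
    by move=> s; exact: cvg_cst.
  - apply: (@continuous_compact_integrable _ (fun _ => gnom)); first exact: segment_compact.
    by move=> s; exact: cvg_cst.
suff HJ : forall x0, Mset bmin bnom gnom gmax Imax traj x0 ->
    (Jinf bnom gnom traj x0 (unom bnom gnom) <= B%:E)%E.
  have HB : (B%:E < (B + 1)%:E)%E by rewrite lte_fin ltrDl ltr01.
  exists (B + 1); split; first by rewrite /B; lra.
  split.
  - by move=> x0 /HJ h; exact: le_lt_trans h HB.
  - move=> x0 hM; apply: le_lt_trans HB; apply: le_trans (HJ x0 hM).
    apply: ereal_inf_lbound; exists (unom bnom gnom) => //; split => //.
    by case: hM => _ /(_ _ Uu).
move=> x0 [[Px0 _] _].
have [[x00 Hx] Hpi] := Hsol x0 _ Px0 Uu.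
set x := traj x0 (unom bnom gnom) in Hx Hpi *.
have key : forall t, 0 <= t ->
   [/\ (@lebesgue_measure R).-integrable `[0%R, t] (fun s => (Ec (x s))%:E),
        (@lebesgue_measure R).-integrable `[0%R, t] (fun s => (Ic (x s))%:E),
        Rintegral (@lebesgue_measure R) `[0%R, t] (fun s => Ec (x s)) <= eta^-1 &
        Rintegral (@lebesgue_measure R) `[0%R, t] (fun s => Ic (x s)) <= gnom^-1].
  move=> t t0; have H := Hx t t0; cbv zeta in H.
  case: H => iS [iE [iI [eS [eE eI]]]].
  set f := fun s => seir_rhs eta (x s) (unom bnom gnom s) in iS iE iI eS eE eI.
  have mD : @measurable _ (measurableTypeR R) (`[0%R, t] : set R) by exact: measurable_itv.
  have eqE : forall s, Ec (x s) = (- eta^-1) * (Sc (f s) + Ec (f s)).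
    move=> s; rewrite /f /seir_rhs /Sc /Ec /=; field; lra.
  have eqI : forall s, Ic (x s) = (- gnom^-1) * (Sc (f s) + Ec (f s) + Ic (f s)).
    move=> s; rewrite /f /seir_rhs /Sc /Ec /Ic /=; field; lra.
  have iSE : (@lebesgue_measure R).-integrable `[0%R, t] (EFin \o (fun s => Sc (f s) + Ec (f s))).
    apply: (eq_integrable mD _ _ _ (integrableD mD iS iE)) => // s _; by rewrite /= EFinD.
  have iSEI : (@lebesgue_measure R).-integrable `[0%R, t] (EFin \o (fun s => Sc (f s) + Ec (f s) + Ic (f s))).
    apply: (eq_integrable mD _ _ _ (integrableD mD iSE iI)) => // s _; by rewrite /= EFinD.
  have iEx : (@lebesgue_measure R).-integrable `[0%R, t] (fun s => (Ec (x s))%:E).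
    apply: (eq_integrable mD _ _ _ (integrableZl mD (- eta^-1) iSE)) => // s _; by rewrite /= -EFinM -eqE.
  have iIx : (@lebesgue_measure R).-integrable `[0%R, t] (fun s => (Ic (x s))%:E).
    apply: (eq_integrable mD _ _ _ (integrableZl mD (- gnom^-1) iSEI)) => // s _; by rewrite /= -EFinM -eqI.
  have [/andP[St0 St1] [/andP[Et0 Et1] [/andP[It0 It1] Sumt]]] := Hpi t t0.
  have [/andP[S00 S01] [/andP[E00 E01] [/andP[I00 I01] Sum0]]] := Px0.
  split => //.
  - under eq_Rintegral => s _ do rewrite eqE.
    rewrite RintegralZl // RintegralD //.
    nra.
  - under eq_Rintegral => s _ do rewrite eqI.
    rewrite RintegralZl // RintegralD // RintegralD //.
    nra.
rewrite /Jinf.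
have cup : (`[0%R, +oo[%classic : set R) = \bigcup_n (`[0%R, n%:R]%classic : set R).
  apply/seteqP; split => s /=.
  - rewrite in_itv /= andbT => s0; exists (Num.truncn s).+1 => //=.
    rewrite in_itv /= s0 /= ltW //; exact: real_truncnS_gt (num_real s).
  - by move=> [n _]; rewrite /= !in_itv /= andbT => /andP[].
have Jeq : forall D, (\int[@lebesgue_measure R]_(t in D)
      (stage_cost bnom gnom (x t) (unom bnom gnom t))%:E =
    \int[@lebesgue_measure R]_(t in D) (Ec (x t) ^+ 2 + Ic (x t) ^+ 2)%:E)%E.
  move=> D; apply: eq_integral => s _.
  by rewrite /stage_cost /unom /= !subrr expr0n /= !addr0.
rewrite Jeq cup.
have mF : forall n : nat, @measurable _ (measurableTypeR R) (`[0%R, n%:R]%classic : set R).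
  by move=> n; exact: measurable_itv.
have nd : nondecreasing_seq (fun n : nat => (`[0%R, n%:R]%classic : set R)).
  move=> m n mn; rewrite subsetEset => s /=; rewrite !in_itv /= => /andP[-> h].
  by apply: le_trans h _; rewrite ler_nat.
have mh : forall n : nat, measurable_fun (`[0%R, n%:R]%classic : set R)
    (fun t => (Ec (x t) ^+ 2 + Ic (x t) ^+ 2)%:E).
  move=> n; have [iE iI _ _] := key n%:R (ler0n _ _).
  apply/measurable_EFinP; apply: measurable_funD; apply: measurable_funX.
  - by move/integrableP: iE => [/measurable_EFinP].
  - by move/integrableP: iI => [/measurable_EFinP].
have h0 : forall (n : nat) t, (`[0%R, n%:R]%classic : set R) t ->
    (0 <= (Ec (x t) ^+ 2 + Ic (x t) ^+ 2)%:E)%E.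
  by move=> n t _; rewrite lee_fin addr_ge0 // sqr_ge0.
have cv := ge0_nondecreasing_set_cvg_integral nd mF mh h0 (mu := @lebesgue_measure R).
rewrite -(cvg_lim _ cv) //.
apply: lime_le; first by apply/cvg_ex; eexists; exact: cv.
apply: nearW => n.
have [iE iI bE bI] := key n%:R (ler0n _ _).
have mD := mF n.
apply: (@le_trans _ _ (\int[@lebesgue_measure R]_(t in `[0%R, n%:R]) ((Ec (x t))%:E + (Ic (x t))%:E))%E).
  apply: ge0_le_integral => //.
  - by move=> t _; rewrite lee_fin addr_ge0 // sqr_ge0.
  - exact: mh.
  - apply: emeasurable_funD.
    + by move/integrableP: iE => [].
    + by move/integrableP: iI => [].
  - move=> t /=; rewrite in_itv /= => /andP[t0 _].
    have [/andP[St0 St1] [/andP[Et0 Et1] [/andP[It0 It1] Sumt]]] := Hpi t t0.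
    rewrite -EFinD lee_fin; nra.
rewrite integralD //.
rewrite -(fineK (integrable_fin_num mD iE)) -(fineK (integrable_fin_num mD iI)).
rewrite -EFinD lee_fin; rewrite /B.
exact: lerD bE bI.
Qed.
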